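(* Let $q=p_1\otimes\cdots\otimes p_k\in B_{\lambda_1}\otimes\cdots\otimes B_{\lambda_k}$ and $1\le i\le n+1$. Let $l\ge\lambda_1+\cdots+\lambda_k$ be large enough that $T_l(q)=T_\infty(q)$, put $v_0=u_l$ and define $v_j$ recursively by $v_{j-1}\otimes p_j\simeq p'_j\otimes v_j$. Then $$\rho_i(q)-\rho_i(T_\infty(q))=\sum_{j=1}^k Q_i(v_{j-1}\otimes p_j).$$
   Context: Fix $n\ge1$. For $l\ge1$ let $B_l=\{x=(x_1,\dots,x_{n+1})\in\mathbb Z_{\ge0}^{n+1}: \sum_i x_i=l\}$ and $u_l=(l,0,\dots,0)\in B_l$. Indices of $x$ are read modulo $n+1$. For $x\in B_l,y\in B_m$ and $i\in\mathbb Z$ put $Q_i(x\otimes y)=\min_{1\le k\le n+1}\big(\sum_{j=1}^{k-1}x_{i+j}+\sum_{j=k+1}^{n+1}y_{i+j}\big)$ (so $Q_{n+1}=Q_0$) and $H(x\otimes y)=\min(l,m)-Q_0(x\otimes y)$. The combinatorial $R$ is the map $B_l\otimes B_m\to B_m\otimes B_l$, $x\otimes y\mapsto\tilde y\otimes\tilde x$, $\tilde x_i=x_i+Q_i-Q_{i-1}$, $\tilde y_i=y_i+Q_{i-1}-Q_i$ ($Q_j=Q_j(x\otimes y)$); write $x\otimes y\simeq\tilde y\otimes\tilde x$, and extend $\simeq$ to tensor products by applying $R$ to adjacent factors. Box-ball system: a state is $p=p_1\otimes\cdots\otimes p_L\in B_{\lambda_1}\otimes\cdots\otimes B_{\lambda_L}$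 ($\lambda_j\ge1$). For $l\ge1$ let $v_0=u_l$ and recursively $v_{j-1}\otimes p_j\simeq p'_j\otimes v_j$ ($1\le j\le L$); then $T_l(p)=p'_1\otimes\cdots\otimes p'_L$. For all sufficiently large $l$, $T_l(p)$ is independent of $l$; this is $T_\infty(p)$. Writing $T_\infty^t(p)=p^t_1\otimes\cdots\otimes p^t_L$, $p^t_j=(x^t_{j,1},\dots,x^t_{j,n+1})$, define for $0\le k\le L$, $1\le d\le n+1$: $\rho_{k,d}(p)=\sum_{j=1}^k(x^0_{j,2}+\cdots+x^0_{j,d})+\sum_{t\ge1}\sum_{j=1}^k(x^t_{j,2}+\cdots+x^t_{j,n+1})$ (a finite sum), and $\rho_{k,0}(p)=\rho_{k,n+1}(p)-(\lambda_1+\cdots+\lambda_k)$. For a state $q$ of length $k$ write $\rho_d(q)=\rho_{k,d}(q)$. *)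

(* Defs.v *)
From Stdlib Require Import ClassicalEpsilon.
From mathcomp Require Import all_boot all_order all_algebra.
Set Implicit Arguments. Unset Strict Implicit. Unset Printing Implicit Defensive.

(* An element x of B_l (for fixed n) is a seq nat of size n+1 with sumn x = l.
   Components are 1-based and read modulo n+1:  comp n x m = x_m. *)
Definition comp (n : nat) (x : seq nat) (m : nat) : nat :=
  nth 0 x ((m + n) %% n.+1).

Definition inB (n l : nat) (x : seq nat) : bool := (size x == n.+1) && (sumn x == l).

Definition u_ (n l : nat) : seq nat := l :: nseq n 0.

Definition Qterm (n i : nat) (x y : seq nat) (k : nat) : nat :=
  \sum_(1 <= j < k) comp n x (i + j) + \sum_(k.+1 <= j < n.+2) comp n y (i + j).

Definition Q (n i : nat) (x y : seq nat) : nat :=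
  foldr minn (Qterm n i x y 1) [seq Qterm n i x y k | k <- iota 2 n].

Definition H (n : nat) (x y : seq nat) : nat := minn (sumn x) (sumn y) - Q n 0 x y.

(* combinatorial R : x (x) y |-> ty (x) tx, returned as the pair (ty, tx).
   tx_i = x_i + Q_i - Q_{i-1},  ty_i = y_i + Q_{i-1} - Q_i  (these are >= 0). *)
Definition Rtil (n : nat) (x y : seq nat) : seq nat * seq nat :=
  ([seq (comp n y i + Q n i.-1 x y - Q n i x y)%N | i <- iota 1 n.+1],
   [seq (comp n x i + Q n i x y - Q n i.-1 x y)%N | i <- iota 1 n.+1]).

Fixpoint Tstep (n : nat) (v : seq nat) (p : seq (seq nat)) : seq (seq nat) * seq nat :=
  match p with
  | [::] => ([::], v)
  | pj :: p' => let r := Rtil n v pj in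
                let rest := Tstep n r.2 p' in (r.1 :: rest.1, rest.2)
  end.

Definition T (n l : nat) (p : seq (seq nat)) : seq (seq nat) := (Tstep n (u_ n l) p).1.

Fixpoint carriers_from (n : nat) (v : seq nat) (p : seq (seq nat)) : seq (seq nat) :=
  match p with
  | [::] => [:: v]
  | pj :: p' => v :: carriers_from n (Rtil n v pj).2 p'
  end.

Definition carriers (n l : nat) (p : seq (seq nat)) := carriers_from n (u_ n l) p.

(* T_infinity(p): the value of T_l(p) for all sufficiently large l
   (chosen by classical description; it exists by the paper's remark). *)
Definition Tinf (n : nat) (p : seq (seq nat)) : seq (seq nat) :=
  epsilon (inhabits p) (fun r => exists L, forall l, L <= l -> T n l p = r).

Definition is_state (n : nat) (p : seq (seq nat)) : bool :=
  all (fun x => (size x == n.+1) && (0 < sumn x)) p.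

Definition colsum (n d : nat) (p : seq (seq nat)) : nat :=
  \sum_(x <- p) \sum_(2 <= c < d.+1) comp n x c.

(* the finite sum  sum_{t>=1} colsum_{n+1}(T_inf^t p): value of the eventually
   constant partial sums (the terms are eventually 0). *)
Definition partial_tail (n : nat) (p : seq (seq nat)) (N : nat) : nat :=
  \sum_(1 <= t < N.+1) colsum n n.+1 (iter t (Tinf n) p).

Definition tailsum (n : nat) (p : seq (seq nat)) : nat :=
  epsilon (inhabits 0) (fun s => exists N, forall M, N <= M -> partial_tail n p M = s).

(* rho_d(q) = rho_{k,d}(q) with k = length of q, for 1 <= d <= n+1 *)
Definition rho (n d : nat) (p : seq (seq nat)) : nat := colsum n d p + tailsum n p.

(* Main.v *)
Require Import Defs.
From Stdlib Require Import ClassicalEpsilon.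
From mathcomp Require Import all_boot all_order all_algebra.
From mathcomp Require Import zify.
Import GRing.Theory Num.Theory.
Local Notation comp := Defs.comp.


Lemma comp_per (n : nat) (x : seq nat) (m : nat) : comp n x (m + n.+1) = comp n x m.
Proof. by rewrite /comp -addnA (addnC n.+1) addnA modnDr. Qed.

Lemma comp_perl (n : nat) (x : seq nat) (m : nat) : comp n x (n.+1 + m) = comp n x m.
Proof. by rewrite addnC comp_per. Qed.

Lemma comp1 (n : nat) (x : seq nat) : comp n x 1 = nth 0 x 0.
Proof. by rewrite /comp add1n modnn. Qed.

Lemma compS (n : nat) (x : seq nat) (c : nat) : c < n.+1 -> comp n x c.+1 = nth 0 x c.
Proof. by move=> h; rewrite /comp addSn -addnS modnDr modn_small. Qed.

Lemma foldr_min_spec (f : nat -> nat) a m k :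
  foldr minn a [seq f j | j <- iota m k] <= a /\
  (forall j, m <= j < m + k -> foldr minn a [seq f j | j <- iota m k] <= f j) /\
  (foldr minn a [seq f j | j <- iota m k] = a \/
   exists2 j, m <= j < m + k & foldr minn a [seq f j | j <- iota m k] = f j).
Proof.
elim: k m => [|k IH] m.
  by split=> //; split=> [j|]; [lia| left].
have [h1 [h2 h3]] := IH m.+1.
have -> : foldr minn a [seq f j | j <- iota m k.+1] =
   minn (f m) (foldr minn a [seq f j | j <- iota m.+1 k]) by [].
move: h1 h2 h3; move: (foldr minn a [seq f j | j <- iota m.+1 k]) => r h1 h2 h3.
split; first by rewrite geq_min h1 orbT.
split.
  move=> j /andP [hj1 hj2]; case: (ltngtP m j) => hj.
  - by rewrite geq_min h2 ?orbT //; lia.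
  - lia.
  - by rewrite hj geq_min leqnn.
case: (leqP (f m) r) => hm.
  by right; exists m; lia.

case: h3 => [->|[j hj ->]]; [by left| right; exists j => //; lia].
Qed.

Lemma Q_le n i x y k : 1 <= k <= n.+1 -> Q n i x y <= Qterm n i x y k.
Proof.
move=> hk; have [h1 [h2 _]] := foldr_min_spec (Qterm n i x y) (Qterm n i x y 1) 2 n.
rewrite /Q; case: (ltngtP k 1) => hk1; [lia| apply: h2; lia| by rewrite hk1].
Qed.

Lemma Q_ex n i x y : exists2 k, 1 <= k <= n.+1 & Q n i x y = Qterm n i x y k.
Proof.
have [_ [_ h3]] := foldr_min_spec (Qterm n i x y) (Qterm n i x y 1) 2 n.
rewrite /Q; case: h3 => [->|[j hj ->]]; [by exists 1| exists j => //; lia].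
Qed.


Lemma sumS (F : nat -> nat) a b :
  \sum_(a.+1 <= j < b.+1) F j = \sum_(a <= j < b) F j.+1.
Proof. by rewrite big_add1. Qed.

Lemma sumL (F : nat -> nat) a b : a < b ->
  \sum_(a <= j < b) F j = F a + \sum_(a.+1 <= j < b) F j.
Proof. by move=> h; rewrite big_ltn. Qed.

Lemma sumR (F : nat -> nat) a b : a <= b ->
  \sum_(a <= j < b.+1) F j = \sum_(a <= j < b) F j + F b.
Proof. by move=> h; rewrite big_nat_recr. Qed.

Lemma sum_monor (F : nat -> nat) a b c : b <= c ->
  \sum_(a <= j < b) F j <= \sum_(a <= j < c) F j.
Proof.
move=> h; case: (leqP a b) => hab.
  by rewrite (@big_cat_nat _ _ _ b a c _ _ hab h) leq_addr.
by rewrite (@big_geq _ _ _ a b _ _) // ltnW.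
Qed.

Lemma sum_monol (F : nat -> nat) a b c : a <= b ->
  \sum_(b <= j < c) F j <= \sum_(a <= j < c) F j.
Proof.
move=> h; case: (leqP b c) => hbc.
  by rewrite (@big_cat_nat _ _ _ b a c _ _ h hbc) leq_addl.
by rewrite (@big_geq _ _ _ b c _ _) // ltnW.
Qed.

Lemma sum_shiftx n x i a b :
  \sum_(a <= j < b) comp n x (i + j.+1) = \sum_(a <= j < b) comp n x (i.+1 + j).
Proof. by apply: eq_big_nat => j _; rewrite addnS addSn. Qed.

Lemma Q_nonneg_x n i x y : 1 <= n ->
  Q n i x y <= comp n x i.+1 + Q n i.+1 x y.
Proof.
move=> hn; have [k hk ->] := Q_ex n i.+1 x y.
case: (ltnP k n.+1) => hkn.
  have hq : Q n i x y <= Qterm n i x y k.+1 by apply: Q_le; lia.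
  apply: (leq_trans hq).
  rewrite /Qterm (sumL _ 1); last lia.
  rewrite sumS sum_shiftx sumS sum_shiftx addn1 -addnA leq_add2l leq_add2l.
  by apply: sum_monor.
have hk' : k = n.+1 by lia.
subst k.
have hq : Q n i x y <= Qterm n i x y n.+1 by apply: Q_le; lia.
apply: (leq_trans hq).
rewrite /Qterm (sumL _ 1) //.
rewrite [\sum_(n.+2 <= _ < n.+2) _ ]big_geq // [\sum_(n.+2 <= _ < n.+2) _ ]big_geq // !addn0 sumS sum_shiftx addn1 leq_add2l.
by apply: sum_monor.
Qed.

Lemma Q_nonneg_y n i x y : 1 <= n ->
  Q n i.+1 x y <= comp n y i.+1 + Q n i x y.
Proof.
move=> hn; have [k hk ->] := Q_ex n i x y.
case: (ltnP 1 k) => hk1.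
  have hq : Q n i.+1 x y <= Qterm n i.+1 x y k.-1 by apply: Q_le; lia.
  apply: (leq_trans hq).
  rewrite /Qterm.
  case: k hk hk1 hq => [|[|k]] hk hk1 hq //=.
  have e1 : \sum_(1 <= j < k.+2) comp n x (i + j) =
     comp n x (i + 1) + \sum_(1 <= j < k.+1) comp n x (i.+1 + j).
    by rewrite (sumL _ 1) // sumS sum_shiftx.
  have e2 : \sum_(k.+2 <= j < n.+2) comp n y (i.+1 + j) =
     \sum_(k.+3 <= j < n.+2) comp n y (i + j) + comp n y i.+1.
    rewrite -sum_shiftx -(sumS (fun j => comp n y (i + j))) sumR; last lia.
    by rewrite -addSnnS comp_per.
  rewrite e1 e2; lia.
have hk' : k = 1 by lia.
subst k.
have hq : Q n i.+1 x y <= Qterm n i.+1 x y 1 by apply: Q_le; lia.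
apply: (leq_trans hq).
rewrite /Qterm.
have e2 : \sum_(2 <= j < n.+2) comp n y (i.+1 + j) =
     \sum_(3 <= j < n.+2) comp n y (i + j) + comp n y i.+1.
  rewrite -sum_shiftx -(sumS (fun j => comp n y (i + j))) sumR; last lia.
  by rewrite -addSnnS comp_per.
have e3 : \sum_(1 <= j < 1) comp n x (i.+1 + j) = 0 by rewrite big_geq.
have e4 : \sum_(1 <= j < 1) comp n x (i + j) = 0 by rewrite big_geq.
have := @sum_monol (fun j => comp n y (i + j)) 2 3 n.+2 isT.
rewrite e2 e3 e4 /=; lia.
Qed.


Definition Bs n d (z : seq nat) := \sum_(2 <= c < d.+1) comp n z c.
Definition Wc n (z : seq nat) := \sum_(1 <= c < n.+2) comp n z c.

Lemma Rt1 n x y c : 1 <= c <= n.+1 ->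
  comp n (Rtil n x y).1 c = comp n y c + Q n c.-1 x y - Q n c x y.
Proof.
case: c => [|c] // /andP [_ hc]; rewrite compS //.
by rewrite (nth_map 0) ?size_iota // nth_iota // add1n.
Qed.

Lemma Rt2 n x y c : 1 <= c <= n.+1 ->
  comp n (Rtil n x y).2 c = comp n x c + Q n c x y - Q n c.-1 x y.
Proof.
case: c => [|c] // /andP [_ hc]; rewrite compS //.
by rewrite (nth_map 0) ?size_iota // nth_iota // add1n.
Qed.

Lemma Rt1e n x y c : 1 <= n -> 1 <= c <= n.+1 ->
  comp n (Rtil n x y).1 c + Q n c x y = comp n y c + Q n c.-1 x y.
Proof.
move=> hn hc; rewrite Rt1 //; case: c hc => [|c] // hc.
have := Q_nonneg_y n c x y hn; rewrite /=; lia.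
Qed.

Lemma Rt2e n x y c : 1 <= n -> 1 <= c <= n.+1 ->
  comp n (Rtil n x y).2 c + Q n c.-1 x y = comp n x c + Q n c x y.
Proof.
move=> hn hc; rewrite Rt2 //; case: c hc => [|c] // hc.
have := Q_nonneg_x n c x y hn; rewrite /=; lia.
Qed.

Lemma Bty n x y d : 1 <= n -> 1 <= d <= n.+1 ->
  Bs n d (Rtil n x y).1 + Q n d x y = Bs n d y + Q n 1 x y.
Proof.
move=> hn; elim: d => [|d IH] // hd.
case: d IH hd => [|d] IH hd.
  by rewrite /Bs !big_geq.
rewrite /Bs sumR // [in RHS]sumR //.
have := IH ltac:(lia); rewrite /Bs => h.
have e : comp n (Rtil n x y).1 d.+2 + Q n d.+2 x y = comp n y d.+2 + Q n d.+1 x y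
  := Rt1e n x y d.+2 hn ltac:(lia).
lia.
Qed.

Lemma Btx n x y d : 1 <= n -> 1 <= d <= n.+1 ->
  Bs n d (Rtil n x y).2 + Q n 1 x y = Bs n d x + Q n d x y.
Proof.
move=> hn; elim: d => [|d IH] // hd.
case: d IH hd => [|d] IH hd.
  by rewrite /Bs !big_geq.
rewrite /Bs sumR // [in RHS]sumR //.
have := IH ltac:(lia); rewrite /Bs => h.
have e : comp n (Rtil n x y).2 d.+2 + Q n d.+1 x y = comp n x d.+2 + Q n d.+2 x y
  := Rt2e n x y d.+2 hn ltac:(lia).
lia.
Qed.

Lemma Q_per n x y : Q n n.+1 x y = Q n 0 x y.
Proof.
have e : forall k, Qterm n n.+1 x y k = Qterm n 0 x y k.
  move=> k; rewrite /Qterm; congr (_ + _); apply: eq_big_nat => j _;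
  by rewrite comp_perl add0n.
by rewrite /Q e; congr foldr; apply: eq_map.
Qed.

Lemma sum_rot n y i : \sum_(1 <= j < n.+2) comp n y (i + j) = Wc n y.
Proof.
elim: i => [|i IH]; first by apply: eq_big_nat => j _; rewrite add0n.
rewrite -IH -sum_shiftx -(sumS (fun j => comp n y (i + j))) sumR //.
rewrite [in RHS](sumL _ 1) // addnC; congr (_ + _).
by rewrite -addSnnS comp_per addn1.
Qed.

Lemma Qterm1_le n i x y : Qterm n i x y 1 <= Wc n y.
Proof.
rewrite /Qterm big_geq // add0n -(sum_rot n y i); apply: sum_monol => //.
Qed.

Lemma Q_le_W n i x y : Q n i x y <= Wc n y.
Proof. apply: leq_trans (Qterm1_le n i x y); apply: Q_le; lia. Qed.

Lemma Q0_eq n x y : Bs n n.+1 y <= comp n x 1 -> Q n 0 x y = Bs n n.+1 y.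
Proof.
move=> h.
have e : \sum_(2 <= j < n.+2) comp n y (0 + j) = Bs n n.+1 y.
  by apply: eq_big_nat => j _; rewrite add0n.
have e0 : \sum_(1 <= j < 1) comp n x (0 + j) = 0 by rewrite big_geq.
apply/eqP; rewrite eqn_leq; apply/andP; split.
  have := Q_le n 0 x y 1 ltac:(lia); rewrite /Qterm e0 e; lia.
have [k hk ->] := Q_ex n 0 x y.
case: k hk => [|[|k]] hk //.
  by rewrite /Qterm e0 e.
rewrite /Qterm (sumL _ 1) // add0n; apply: (leq_trans h); rewrite -addnA leq_addr //.
Qed.

Lemma Q1_le n x y : 1 <= n -> Q n 1 x y <= Bs n n.+1 x.
Proof.
move=> hn; have := Q_le n 1 x y n.+1 ltac:(lia).
have e0 : \sum_(n.+2 <= j < n.+2) comp n y (1 + j) = 0 by rewrite big_geq.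
have e : \sum_(1 <= j < n.+1) comp n x (1 + j) = Bs n n.+1 x.
  by rewrite /Bs -(sumS (fun j => comp n x j)); apply: eq_big_nat.
rewrite /Qterm e0 e; lia.
Qed.


Definition bumpx m (x : seq nat) :=
  match x with [::] => [::] | a :: r => (a + m) :: r end.

Lemma comp_bump_dich n m x c :
  comp n (bumpx m x) c = comp n x c \/ comp n x c = comp n x 1.
Proof.
rewrite comp1 /comp; case: x => [|a r] /=; first by left.
by case: ((c + n) %% n.+1) => [|k] /=; [right| left].
Qed.

Lemma comp_bump_ge n m x c : comp n x c <= comp n (bumpx m x) c.
Proof.
rewrite /comp; case: x => [|a r] //=.
by case: ((c + n) %% n.+1) => [|k] //=; rewrite leq_addr.
Qed.

Lemma Sx_dich n m i x k :
  \sum_(1 <= j < k) comp n (bumpx m x) (i + j) = \sum_(1 <= j < k) comp n x (i + j) \/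
  comp n x 1 <= \sum_(1 <= j < k) comp n x (i + j).
Proof.
elim: k => [|k IH]; first by left; rewrite !big_geq.
case: k IH => [|k] IH; first by left; rewrite !big_geq.
rewrite (sumR (fun j => comp n (bumpx m x) (i + j))) // (sumR (fun j => comp n x (i + j))) //.
case: IH => [->|h]; last by right; apply: (leq_trans h); rewrite leq_addr.
case: (comp_bump_dich n m x (i + k.+1)) => [->|h]; first by left.
by right; rewrite -h leq_addl.
Qed.

Lemma Qterm_dich n m i x y k :
  Qterm n i (bumpx m x) y k = Qterm n i x y k \/ comp n x 1 <= Qterm n i x y k.
Proof.
rewrite /Qterm; case: (Sx_dich n m i x k) => [->|h]; first by left.
by right; apply: (leq_trans h); rewrite leq_addr.
Qed.

Lemma Qterm_bump_ge n m i x y k : Qterm n i x y k <= Qterm n i (bumpx m x) y k.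
Proof. rewrite /Qterm; apply: leq_add => //; apply: leq_sum => j _; exact: comp_bump_ge. Qed.

Lemma Qterm1_bump n m i x y : Qterm n i (bumpx m x) y 1 = Qterm n i x y 1.
Proof. by rewrite /Qterm; congr (_ + _); rewrite big_geq // big_geq. Qed.

Lemma Q_bump n m i x y : Wc n y <= comp n x 1 -> Q n i (bumpx m x) y = Q n i x y.
Proof.
move=> hW; apply/eqP; rewrite eqn_leq; apply/andP; split.
  have [k hk ->] := Q_ex n i x y.
  case: (Qterm_dich n m i x y k) => [<-|h]; first by apply: Q_le.
  apply: leq_trans (Q_le n i (bumpx m x) y 1 ltac:(lia)) _.
  rewrite Qterm1_bump; apply: leq_trans (Qterm1_le n i x y) _.
  exact: leq_trans hW h.
have [k hk ->] := Q_ex n i (bumpx m x) y.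
case: (Qterm_dich n m i x y k) => [->|h]; first by apply: Q_le.
apply: leq_trans (Q_le n i x y 1 ltac:(lia)) _.
apply: leq_trans (Qterm1_le n i x y) _.
apply: leq_trans hW _; apply: leq_trans h _; exact: Qterm_bump_ge.
Qed.

Lemma Rtil_bump n m a r y : 1 <= n -> Wc n y <= a ->
  Rtil n ((a + m) :: r) y = ((Rtil n (a :: r) y).1, bumpx m (Rtil n (a :: r) y).2).
Proof.
move=> hn hW.
have hW' : Wc n y <= comp n (a :: r) 1 by rewrite comp1.
have eQ : forall i, Q n i ((a + m) :: r) y = Q n i (a :: r) y.
  move=> i; exact: (Q_bump n m i (a :: r) y hW').
rewrite /Rtil /=; congr (_, _).
  by congr (_ :: _); [rewrite !eQ| apply: eq_map => c; rewrite !eQ].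
rewrite !eQ; congr (_ :: _).
  have := Q_nonneg_x n 0 (a :: r) y hn; rewrite !comp1 /=; lia.
apply/eq_in_map => c; rewrite mem_iota => hc.
rewrite !eQ; congr (_ - _); congr (_ + _).
case: c hc => [|[|c]] hc; first by [].
  by [].
rewrite !compS //=; lia.
Qed.


Definition Wtot n (p : seq (seq nat)) := \sum_(y <- p) Wc n y.

Lemma Tstep_cons n v y p :
  Tstep n v (y :: p) = ((Rtil n v y).1 :: (Tstep n (Rtil n v y).2 p).1,
                        (Tstep n (Rtil n v y).2 p).2).
Proof. by []. Qed.

Lemma Rt2_cons n x y :
  (Rtil n x y).2 = (comp n x 1 + Q n 1 x y - Q n 0 x y) :: behead (Rtil n x y).2.
Proof. by []. Qed.

Lemma Rt2_1 n x y : comp n x 1 - Wc n y <= comp n (Rtil n x y).2 1.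
Proof.
rewrite Rt2 // /=; have := Q_le_W n 0 x y; lia.
Qed.

Lemma Wtot_cons n y p : Wtot n (y :: p) = Wc n y + Wtot n p.
Proof. by rewrite /Wtot big_cons. Qed.

Lemma Tstep_bump n m : 1 <= n -> forall p a r, Wtot n p <= a ->
  Tstep n ((a + m) :: r) p = ((Tstep n (a :: r) p).1, bumpx m (Tstep n (a :: r) p).2).
Proof.
move=> hn; elim=> [|y p IH] a r hW //.
rewrite Wtot_cons in hW.
rewrite !Tstep_cons (Rtil_bump n m a r y hn); last lia.
rewrite [(Rtil n (a :: r) y).2]Rt2_cons /= IH //.
rewrite comp1 /=; have := Q_le_W n 0 (a :: r) y; lia.
Qed.

Lemma T_stab n p l m : 1 <= n -> Wtot n p <= l -> T n (l + m) p = T n l p.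
Proof. by move=> hn hW; rewrite /T /u_ (@Tstep_bump n m hn p l (nseq n 0) hW). Qed.

Lemma Tinf_eq n p l : 1 <= n -> Wtot n p <= l -> Tinf n p = T n l p.
Proof.
move=> hn hW.
have ex : exists r, exists L, forall l', L <= l' -> T n l' p = r.
  exists (T n (Wtot n p) p), (Wtot n p) => l' hl'.
  by rewrite -(subnKC hl') T_stab.
have [L HL] := epsilon_spec (inhabits p) _ ex.
rewrite /Tinf -(HL (maxn l L)) ?leq_maxr //.
by rewrite -(subnKC (leq_maxl l L)) T_stab.
Qed.


Notation nb n := (Bs n n.+1).

Lemma colsumE n d p : colsum n d p = \sum_(x <- p) Bs n d x.
Proof. by []. Qed.

Lemma colsum_cons n d y p : colsum n d (y :: p) = Bs n d y + colsum n d p.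
Proof. by rewrite !colsumE big_cons. Qed.

Lemma colsum_nil n d : colsum n d [::] = 0.
Proof. by rewrite colsumE big_nil. Qed.

Lemma conserv n x y : 1 <= n ->
  nb n (Rtil n x y).1 + nb n (Rtil n x y).2 = nb n y + nb n x.
Proof.
move=> hn; have h1 := Bty n x y n.+1 hn ltac:(lia).
have h2 := Btx n x y n.+1 hn ltac:(lia); lia.
Qed.

Lemma nb_le_W n y : nb n y <= Wc n y.
Proof. by rewrite /Wc (sumL _ 1) // leq_addl. Qed.

Fixpoint Phi n (p : seq (seq nat)) : nat :=
  match p with [::] => 0 | y :: r => (size r).+1 * nb n y + Phi n r end.

Fixpoint Cc n v (p : seq (seq nat)) : nat :=
  match p with [::] => 0 | y :: r => nb n (Rtil n v y).2 + Cc n (Rtil n v y).2 r end.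

Lemma size_Tstep n v p : size (Tstep n v p).1 = size p.
Proof. by elim: p v => [|y p IH] v //=; rewrite IH. Qed.

Lemma Phi_cons n y p : Phi n (y :: p) = (size p).+1 * nb n y + Phi n p.
Proof. by []. Qed.

Lemma Cc_cons n v y p : Cc n v (y :: p) = nb n (Rtil n v y).2 + Cc n (Rtil n v y).2 p.
Proof. by []. Qed.

Lemma Phi_eq n : 1 <= n -> forall p v,
  Phi n (Tstep n v p).1 + Cc n v p = Phi n p + size p * nb n v.
Proof.
move=> hn; elim=> [|y p IH] v; first by rewrite /=; lia.
rewrite Tstep_cons Phi_cons Cc_cons Phi_cons size_Tstep.
have h := IH (Rtil n v y).2.
have c := conserv n v y hn.
have -> : size (y :: p) = (size p).+1 by [].
have c' := congr1 (muln (size p).+1) c.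
rewrite !mulnDr in c'.
rewrite mulSn in h c' *; lia.
Qed.

Lemma Cc_pos n : 1 <= n -> forall p v, nb n v = 0 -> Wtot n p <= comp n v 1 ->
  0 < colsum n n.+1 p -> 0 < Cc n v p.
Proof.
move=> hn; elim=> [|y p IH] v hv hW; first by rewrite colsum_nil.
rewrite colsum_cons Wtot_cons in hW * => hpos; rewrite Cc_cons.
have c := conserv n v y hn.
case: (posnP (nb n y)) => hy.
  rewrite hy add0n in hpos.
  have htx : nb n (Rtil n v y).2 = 0 by lia.
  rewrite htx add0n; apply: IH => //.
  have := Rt2_1 n v y; lia.
have h2 := Btx n v y n.+1 hn ltac:(lia).
rewrite Q_per Q0_eq in h2; last by have := nb_le_W n y; lia.
have := Q1_le n v y hn; lia.
Qed.

Lemma zero_pres n : 1 <= n -> forall p v, nb n v = 0 -> colsum n n.+1 p = 0 ->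
  colsum n n.+1 (Tstep n v p).1 = 0.
Proof.
move=> hn; elim=> [|y p IH] v hv //.
rewrite Tstep_cons !colsum_cons => h.
have c := conserv n v y hn.
rewrite IH; lia.
Qed.

Lemma nb_u n l : nb n (u_ n l) = 0.
Proof.
rewrite /Bs big_nat_cond big1 // => c /andP [/andP [h1 h2] _].
case: c h1 h2 => [|c] // h1 h2; rewrite compS //=.
case: c h1 h2 => [|c] // h1 h2 /=; by rewrite nth_nseq if_same.
Qed.

Lemma comp_u1 n l : comp n (u_ n l) 1 = l.
Proof. by rewrite comp1. Qed.

Lemma Tinf_T n p : 1 <= n -> Tinf n p = (Tstep n (u_ n (Wtot n p)) p).1.
Proof. by move=> hn; rewrite (@Tinf_eq n p (Wtot n p) hn (leqnn _)). Qed.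

Lemma zero_iter n p : 1 <= n -> colsum n n.+1 p = 0 ->
  forall t, colsum n n.+1 (iter t (Tinf n) p) = 0.
Proof.
move=> hn h; elim=> [|t IH] //=.
rewrite Tinf_T //; apply: zero_pres => //; exact: nb_u.
Qed.

Lemma ev0 n : 1 <= n -> forall k p, Phi n p < k ->
  exists N, forall t, N <= t -> colsum n n.+1 (iter t (Tinf n) p) = 0.
Proof.
move=> hn; elim=> [|k IH] p hk //.
case: (posnP (colsum n n.+1 p)) => hc.
  by exists 0 => t _; apply: zero_iter.
have hlt : Phi n (Tinf n p) < Phi n p.
  rewrite Tinf_T //.
  have := Phi_eq n hn p (u_ n (Wtot n p)); rewrite nb_u muln0 addn0.
  have := Cc_pos n hn p (u_ n (Wtot n p)) (nb_u n (Wtot n p)); rewrite comp_u1 => h; have := h (leqnn _) hc.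
  lia.
have [N HN] := IH (Tinf n p) ltac:(lia).
exists N.+1 => [[|t]] ht //; rewrite iterSr; apply: HN; lia.
Qed.

Lemma pt_shift n p N :
  partial_tail n p N.+1 = colsum n n.+1 (Tinf n p) + partial_tail n (Tinf n p) N.
Proof.
rewrite /partial_tail (sumL _ 1) //; congr (_ + _).
rewrite sumS; apply: eq_big_nat => t _; by rewrite iterSr.
Qed.

Lemma pt_const n p N : (forall t, N <= t -> colsum n n.+1 (iter t (Tinf n) p) = 0) ->
  forall M, N <= M -> partial_tail n p M = partial_tail n p N.
Proof.
move=> h; elim=> [|M IH] hM; first by have -> : N = 0 by lia.
case: (ltnP N M.+1) => hN; last by have -> : N = M.+1 by lia.
rewrite /partial_tail sumR // h // addn0; apply: IH; lia.
Qed.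

Lemma tailsum_spec n p : (exists N, forall t, N <= t -> colsum n n.+1 (iter t (Tinf n) p) = 0) ->
  exists N, forall M, N <= M -> partial_tail n p M = tailsum n p.
Proof.
move=> [N HN].
have ex : exists s, exists N, forall M, N <= M -> partial_tail n p M = s.
  by exists (partial_tail n p N), N; apply: pt_const.
exact: (epsilon_spec (inhabits 0) _ ex).
Qed.

Lemma tailsum_shift n p : 1 <= n ->
  tailsum n p = colsum n n.+1 (Tinf n p) + tailsum n (Tinf n p).
Proof.
move=> hn.
have [N1 H1] := tailsum_spec n _ (ev0 n hn (Phi n p).+1 p (ltnSn _)).
have [N2 H2] := tailsum_spec n _ (ev0 n hn (Phi n (Tinf n p)).+1 (Tinf n p) (ltnSn _)).
rewrite -(H1 (maxn N1 N2).+1) ?pt_shift ?H2 //; lia.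
Qed.


Lemma carriers_cons n v y p :
  carriers_from n v (y :: p) = v :: carriers_from n (Rtil n v y).2 p.
Proof. by []. Qed.

Lemma main_gen n i : 1 <= n -> 1 <= i <= n.+1 -> forall p v,
  Wtot n p <= comp n v 1 ->
  colsum n i p + colsum n n.+1 (Tstep n v p).1 =
  colsum n i (Tstep n v p).1 +
  \sum_(0 <= j < size p) Q n i (nth [::] (carriers_from n v p) j) (nth [::] p j).
Proof.
move=> hn hi; elim=> [|y p IH] v hW.
  by rewrite /= !colsum_nil big_geq.
rewrite Wtot_cons in hW.
have e : \sum_(0 <= j < size (y :: p))
   Q n i (nth [::] (carriers_from n v (y :: p)) j) (nth [::] (y :: p) j) =
   Q n i v y + \sum_(0 <= j < size p)
   Q n i (nth [::] (carriers_from n (Rtil n v y).2 p) j) (nth [::] p j).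
  by rewrite big_nat_recl.
rewrite e Tstep_cons !colsum_cons.
have hIH := IH (Rtil n v y).2 ltac:(have := Rt2_1 n v y; lia).
have h1 := Bty n v y i hn hi.
have h2 := Bty n v y n.+1 hn ltac:(lia).
rewrite Q_per Q0_eq in h2; last by have := nb_le_W n y; lia.
lia.
Qed.

Lemma Wc_size n y : size y = n.+1 -> Wc n y = sumn y.
Proof.
move=> hs; rewrite /Wc sumS sumnE [RHS](big_nth 0) hs.
by apply: eq_big_nat => c /andP [_ hc]; rewrite compS.
Qed.

Local Open Scope ring_scope.

Theorem lemma4p5 (n : nat) (q : seq (seq nat)) (i l : nat) :
  (1 <= n)%N ->
  is_state n q ->
  (1 <= i <= n.+1)%N ->
  (\sum_(x <- q) sumn x <= l)%N ->
  T n l q = Tinf n q ->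
  (rho n i q)%:Z - (rho n i (Tinf n q))%:Z =
  (\sum_(0 <= j < size q) Q n i (nth [::] (carriers n l q) j) (nth [::] q j))%N%:Z.
Proof.
move=> hn hst hi hl hT.
have hW : (Wtot n q <= l)%N.
  apply: leq_trans hl; rewrite /Wtot (eq_big_seq (fun x => sumn x)) //.
  move=> x hx; move/allP: hst => /(_ x hx) /andP [/eqP hs _].
  exact: Wc_size.
have hts := tailsum_shift n q hn.
have hm := main_gen n i hn hi q (u_ n l) ltac:(by rewrite comp_u1).
rewrite /rho hts -hT.
rewrite /T /carriers in hm *.
set S := (\sum_(0 <= j < size q) _)%N in hm *.
set t := tailsum _ _.
have -> : (colsum n i q + (colsum n n.+1 (Tstep n (u_ n l) q).1 + t) =
   (colsum n i (Tstep n (u_ n l) q).1 + t) + S)%N by lia.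
by rewrite PoszD addrAC subrr add0r.
Qed.
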